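(* Let $X$ be a space with $|X|<\mathfrak{b}$. (a) If $X$ is absolutely strongly star-Lindelöf, then $X$ is selectively strongly star-Hurewicz. (b) If $X$ is absolutely Star-$\sigma$-cd, then $X$ satisfies $selSS^*_{cd}(\mathcal{O},\Gamma)$: for every sequence $(\mathcal{U}_n:n\in\omega)$ of open covers and every sequence $(D_n:n\in\omega)$ of dense subsets there are sets $C_n\subseteq D_n$, closed and discrete in $X$, such that every $x\in X$ lies in $St(C_n,\mathcal{U}_n)$ for all but finitely many $n$.
   Context: All spaces are regular. $St(A,\mathcal{U})=\bigcup\{U\in\mathcal{U}:U\cap A\neq\emptyset\}$. $\mathfrak{b}$ is the bounding number. $X$ is absolutely strongly star-Lindelöf if for every open cover $\mathcal{U}$ and every dense $D\subseteq X$ there is a countable $C\subseteq D$ with $St(C,\mathcal{U})=X$. $X$ is selectively strongly star-Hurewicz if for every sequence $(\mathcal{U}_n)$ of open covers and every sequence $(D_n)$ of dense subsets there are finite $F_n\subseteq D_n$ such that every $x\in X$ lies in $St(F_n,\mathcal{U}_n)$ for all but finitely many $n$. $X$ is absolutely Star-$\sigma$-cd if for every dense $D\subseteq X$ and every open cover $\mathcal{U}$ there is $K\subseteq D$ which is a countable union of closed discrete subsets of $X$ with $St(K,\mathcal{U})=X$. *)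

(* Defs.v *)
From HB Require Import structures.
From mathcomp Require Import all_boot all_order all_algebra.
From mathcomp Require Import all_classical all_reals all_analysis.
Set Implicit Arguments. Unset Strict Implicit. Unset Printing Implicit Defensive.
Local Open Scope classical_set_scope.
Local Open Scope card_scope.

Definition St {X : Type} (A : set X) (UU : set (set X)) : set X :=
  \bigcup_(U in [set U | UU U /\ U `&` A !=set0]) U.

Definition open_cover {X : topologicalType} (UU : set (set X)) : Prop :=
  (forall U, UU U -> open U) /\ \bigcup_(U in UU) U = setT.

Definition closed_discrete {X : topologicalType} (C : set X) : Prop :=
  closed C /\ forall x, C x -> exists U : set X, [/\ open U, U x & U `&` C = [set x]].

Definition sigma_cd {X : topologicalType} (K : set X) : Prop :=
  exists Kn : nat -> set X, (forall n, closed_discrete (Kn n)) /\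
    K = \bigcup_(n in setT) Kn n.

Definition regular_T3 (X : topologicalType) : Prop :=
  regular_space X /\ accessible_space X.

Definition le_star (f g : nat -> nat) : Prop :=
  exists N, forall n, (N <= n)%N -> (f n <= g n)%N.

Definition unbounded (F : set (nat -> nat)) : Prop :=
  ~ exists g, forall f, F f -> le_star f g.

(* |X| < b : no unbounded family of cardinality <= |X|
   (b = the least cardinality of an unbounded family) *)
Definition card_lt_b (X : Type) : Prop :=
  forall F : set (nat -> nat), unbounded F -> ~ (F #<= [set: X]).

Definition absolutely_SSL (X : topologicalType) : Prop :=
  forall (UU : set (set X)) (D : set X), open_cover UU -> dense D ->
    exists C, [/\ C `<=` D, countable C & St C UU = setT].

Definition selectively_SSH (X : topologicalType) : Prop :=
  forall (UU : nat -> set (set X)) (D : nat -> set X),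
    (forall n, open_cover (UU n)) -> (forall n, dense (D n)) ->
    exists F : nat -> set X, (forall n, F n `<=` D n /\ finite_set (F n)) /\
      forall x, exists N, forall n, (N <= n)%N -> St (F n) (UU n) x.

Definition absolutely_star_sigma_cd (X : topologicalType) : Prop :=
  forall (D : set X) (UU : set (set X)), dense D -> open_cover UU ->
    exists K, [/\ K `<=` D, sigma_cd K & St K UU = setT].

Definition selSS_cd_O_Gamma (X : topologicalType) : Prop :=
  forall (UU : nat -> set (set X)) (D : nat -> set X),
    (forall n, open_cover (UU n)) -> (forall n, dense (D n)) ->
    exists C : nat -> set X, (forall n, C n `<=` D n /\ closed_discrete (C n)) /\
      forall x, exists N, forall n, (N <= n)%N -> St (C n) (UU n) x.

(* Main.v *)
Require Import Defs.
From HB Require Import structures.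
From mathcomp Require Import all_boot all_order all_algebra.
From mathcomp Require Import all_classical all_reals all_analysis.
Local Open Scope classical_set_scope.
Local Open Scope card_scope.

Fixpoint upto {T} (f : nat -> set T) (m : nat) : set T :=
  match m with 0 => f 0%N | m'.+1 => upto f m' `|` f m'.+1 end.

Lemma upto_sub {T} (f : nat -> set T) k m : (k <= m)%N -> f k `<=` upto f m.
Proof.
elim: m => [|m IH]; first by rewrite leqn0 => /eqP ->.
rewrite leq_eqVlt => /orP[/eqP -> | ]; first by move=> x fx; right.
by rewrite ltnS => /IH H x /H; left.
Qed.

Lemma upto_ind {T} (P : set T -> Prop) (f : nat -> set T) :
  (forall A B, P A -> P B -> P (A `|` B)) -> (forall k, P (f k)) ->
  forall m, P (upto f m).
Proof. by move=> HU Hf; elim=> [|m IH] //=; apply: HU. Qed.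

Lemma St_sub {T} (A B : set T) UU : A `<=` B -> St A UU `<=` St B UU.
Proof.
move=> AB x [U [HU [c [Uc Ac]]] Ux]; exists U => //; split => //.
by exists c; split => //; apply: AB.
Qed.

Lemma key {X : topologicalType} {UU : nat -> set (set X)} {e : nat -> nat -> set X} :
  card_lt_b X -> (forall n x, exists k, St (e n k) (UU n) x) ->
  exists g : nat -> nat, forall x, exists N, forall n, (N <= n)%N ->
     exists2 k, (k <= g n)%N & St (e n k) (UU n) x.
Proof.
move=> Hb He.
have /choice[f Hf] : forall x : X, exists fx : nat -> nat,
    forall n, St (e n (fx n)) (UU n) x.
  move=> x; have /choice[fx Hfx] := fun n => He n x; by exists fx.
have Hle : range f #<= [set: X] by exact: card_image_le.
have : ~ unbounded (range f) by move=> /Hb; apply.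
move=> /contrapT[g Hg]; exists g => x.
have [N HN] := Hg (f x) (ex_intro2 _ _ x I erefl).
by exists N => n /HN Hn; exists (f x n).
Qed.
Lemma cd_local {X : topologicalType} {A : set X} {x : X} :
  A x -> (exists U : set X, [/\ open U, U x & U `&` A = [set x]]) <->
  (exists U : set X, [/\ open U, U x & forall y, U y -> A y -> y = x]).
Proof.
move=> Ax; split=> -[U [oU Ux HU]]; exists U; split => //.
  by move=> y Uy Ay; have : (U `&` A) y by [] ; rewrite HU.
apply/seteqP; split=> [y [Uy Ay]|y ->]; first exact: HU.
by [].
Qed.

Lemma cdU (X : topologicalType) (A B : set X) :
  closed_discrete A -> closed_discrete B -> closed_discrete (A `|` B).
Proof.
move=> [cA dA] [cB dB]; split; first exact: closedU.
move=> x ABx; apply: (cd_local ABx).2.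
have gA : A x -> exists U : set X, [/\ open U, U x & forall y, U y -> A y -> y = x].
  by move=> Ax; apply: (cd_local Ax).1; apply: dA.
have gB : B x -> exists U : set X, [/\ open U, U x & forall y, U y -> B y -> y = x].
  by move=> Bx; apply: (cd_local Bx).1; apply: dB.
have hA : exists U : set X, [/\ open U, U x & forall y, U y -> A y -> y = x].
  case: (pselect (A x)) => [/gA //|nAx]; exists (~` A); split; [exact: closed_openC | exact: nAx | by move=> y nAy Ay; case: nAy].
have hB : exists U : set X, [/\ open U, U x & forall y, U y -> B y -> y = x].
  case: (pselect (B x)) => [/gB //|nBx]; exists (~` B); split; [exact: closed_openC | exact: nBx | by move=> y nBy By; case: nBy].
case: hA => UA [oA UAx HA]; case: hB => UB [oB UBx HB].
exists (UA `&` UB); split => //; first exact: openI.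
by move=> y [UAy UBy] [/(HA _ UAy)|/(HB _ UBy)].
Qed.

Lemma subsingle_finite T (A : set T) :
  (forall a b, A a -> A b -> a = b) -> finite_set A.
Proof.
move=> H; case: (pselect (exists a, A a)) => [[a Aa]|nA].
  apply: (sub_finite_set (B := [set a])); last exact: finite_set1.
  by move=> b Ab; rewrite (H b a).
have -> : A = set0 by apply/seteqP; split=> // b Ab; case: nA; exists b.
exact: finite_set0.
Qed.

Theorem mainTheorem5 (X : topologicalType) :
  regular_T3 X -> card_lt_b X ->
  (absolutely_SSL X -> selectively_SSH X) /\
  (absolutely_star_sigma_cd X -> selSS_cd_O_Gamma X).
Proof.
move=> _ Hb; split.
- move=> HS UU D HU HD.
  have /choice[C HC] : forall n, exists C,
      [/\ C `<=` D n, countable C & St C (UU n) = setT] by move=> n; apply: HS.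
  have /choice[h Hh] : forall n, exists h : X -> nat, {in C n &, injective h}.
    by move=> n; apply/countable_injP; case: (HC n).
  pose e n k := [set c | C n c /\ h n c = k].
  have He : forall n x, exists k, St (e n k) (UU n) x.
    move=> n x; have : St (C n) (UU n) x by case: (HC n) => _ _ ->.
    case=> U [UUU [c [Uc Cc]]] Ux; exists (h n c); exists U => //; split => //.
    by exists c; split.
  have [g Hg] := key (X:=X) Hb He.
  exists (fun n => upto (e n) (g n)); split.
  + move=> n; split.
    * apply: (@upto_ind _ (fun S => S `<=` D n)) => [A B AD BD y [/AD|/BD] //|k y [Cy _]].
      by case: (HC n) => /(_ y Cy).
    * apply: (@upto_ind _ (finite_set)) => [A B fA fB|k]; first by rewrite finite_setU.
      apply: subsingle_finite => a b [Ca ha] [Cb hb]; apply: (Hh n).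
      - exact/mem_set.
      - exact/mem_set.
      - by rewrite ha hb.
  + move=> x; have [N HN] := Hg x; exists N => n /HN [k kle Hk].
    exact: (St_sub _ _ _ (upto_sub (e n) _ _ kle) _ Hk).
- move=> HS UU D HU HD.
  have /choice[K HK] : forall n, exists K,
      [/\ K `<=` D n, sigma_cd K & St K (UU n) = setT] by move=> n; apply: HS.
  have /choice[e He] : forall n, exists Kn : nat -> set X,
      (forall k, closed_discrete (Kn k)) /\ K n = \bigcup_(k in setT) Kn k.
    by move=> n; case: (HK n).
  have He' : forall n x, exists k, St (e n k) (UU n) x.
    move=> n x; have : St (K n) (UU n) x by case: (HK n) => _ _ ->.
    case: (He n) => _ ->; case=> U [UUU [c [Uc [k _ ekc]]]] Ux.
    by exists k; exists U => //; split => //; exists c.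
  have [g Hg] := key (X:=X) Hb He'.
  exists (fun n => upto (e n) (g n)); split.
  + move=> n; split.
    * apply: (@upto_ind _ (fun S => S `<=` D n)) => [A B AD BD y [/AD|/BD] //|k y eky].
      case: (HK n) => KD _ _; apply: KD; case: (He n) => _ ->; by exists k.
    * apply: (@upto_ind _ (closed_discrete)); first exact: cdU.
      by move=> k; case: (He n) => + _; apply.
  + move=> x; have [N HN] := Hg x; exists N => n /HN [k kle Hk].
    exact: (St_sub _ _ _ (upto_sub (e n) _ _ kle) _ Hk).
Qed.
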